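(* Let $q$ be a prime power and let $C\subseteq\mathrm{GF}(q^m)^n$ be a (linear or nonlinear) code with $n\le m$, $|C|=q^{mk}$ for an integer $1\le k\le n$, and minimum rank distance $d_{\mathrm R}=n-k+1$. Let $k\le v\le n$, let $\mathbf B$ be a $v\times n$ matrix and $\bar{\mathbf B}$ an $(n-v)\times n$ matrix over $\mathrm{GF}(q)$ such that the matrix obtained by stacking $\mathbf B$ above $\bar{\mathbf B}$ is invertible, and let $\mathcal V,\bar{\mathcal V}$ be their $\mathrm{GF}(q^m)$-row spans. Then the restriction $C_{\mathcal V}=\{r_{\mathcal V}(\mathbf c):\mathbf c\in C\}\subseteq\mathrm{GF}(q^m)^v$ is a code of length $v$ and cardinality $q^{mk}$ with minimum rank distance $v-k+1$ (i.e., an MRD code).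
   Context: For a vector $\mathbf x$ over $\mathrm{GF}(q^m)$, $\mathrm{rk}(\mathbf x)$ is the dimension over $\mathrm{GF}(q)$ of the $\mathrm{GF}(q)$-span of its coordinates; the minimum rank distance of a code is the minimum of $\mathrm{rk}(\mathbf c-\mathbf d)$ over distinct codewords. Every $\mathbf x\in\mathrm{GF}(q^m)^n$ decomposes uniquely as $\mathbf x=\mathbf a\mathbf B+\mathbf b\bar{\mathbf B}$ with $\mathbf a\in\mathrm{GF}(q^m)^v$, $\mathbf b\in\mathrm{GF}(q^m)^{n-v}$; here $\mathbf a\mathbf B=\mathbf x_{\mathcal V}$ is the projection of $\mathbf x$ onto $\mathcal V$ along $\bar{\mathcal V}$, and $r_{\mathcal V}(\mathbf x)=\mathbf a$ (equivalently $\mathbf x_{\mathcal V}\mathbf B^{-R}$ for a right inverse $\mathbf B^{-R}$ of $\mathbf B$). *)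

(* Defs.v *)
From HB Require Import structures.
From mathcomp Require Import all_boot all_order all_algebra all_field.
Set Implicit Arguments. Unset Strict Implicit. Unset Printing Implicit Defensive.
Import GRing.Theory.
Local Open Scope ring_scope.

(* GF(q) is a finite field F; GF(q^m) is a finite-dimensional field extension
   L of F, with m = \dim {:L}.  [finvect_type L] is L equipped with its
   canonical finite type structure (F is finite). *)
Notation ext L := (finvect_type L).

Definition rk (F : finFieldType) (L : fieldExtType F) (n : nat) (x : 'rV[ext L]_n) : nat :=
  \dim (span [seq (x ord0 i : L) | i <- enum 'I_n]).

Definition min_rank_dist (F : finFieldType) (L : fieldExtType F) (n : nat)
    (C : {set 'rV[ext L]_n}) (d : nat) : Prop :=
  (exists c1 c2, [/\ c1 \in C, c2 \in C, c1 != c2 & rk (c1 - c2) = d]) /\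
  (forall c1 c2, c1 \in C -> c2 \in C -> c1 != c2 -> (d <= rk (c1 - c2))%N).

Definition liftmx (F : finFieldType) (L : fieldExtType F) (r n : nat) (M : 'M[F]_(r, n))
  : 'M[ext L]_(r, n) := map_mx (in_alg (ext L)) M.

(* The restriction C_V = { r_V(c) : c in C }, where r_V(x) is the unique a with
   x = a B + b Bbar. *)
Definition restr (F : finFieldType) (L : fieldExtType F) (n v : nat)
    (C : {set 'rV[ext L]_n}) (B : 'M[F]_(v, n)) (Bbar : 'M[F]_(n - v, n))
  : {set 'rV[ext L]_v} :=
  [set a | [exists c in C, exists b : 'rV[ext L]_(n - v),
              c == a *m liftmx L B + b *m liftmx L Bbar]].

(* Main.v *)
Require Import Defs.
From HB Require Import structures.
From mathcomp Require Import all_boot all_order all_algebra all_field.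
From mathcomp Require Import zify.
Set Implicit Arguments. Unset Strict Implicit. Unset Printing Implicit Defensive.
Import GRing.Theory.
Local Open Scope ring_scope.

Lemma card_ext (F : finFieldType) (L : fieldExtType F) : #|ext L| = (#|F| ^ \dim {:L})%N.
Proof.
by rewrite -(@card_vspacef F (ext L) (Vector.class (ext L))) card_vspace.
Qed.

Lemma rk_le (F : finFieldType) (L : fieldExtType F) n (x : 'rV[ext L]_n) (U : {vspace L}) :
  (forall i, (x ord0 i : L) \in U) -> (rk x <= \dim U)%N.
Proof.
move=> H; rewrite /rk; apply: dimvS; apply/span_subvP => y /mapP [i _ ->]; exact: H.
Qed.

Lemma rk_size (F : finFieldType) (L : fieldExtType F) n (x : 'rV[ext L]_n) : (rk x <= n)%N.
Proof. by rewrite /rk (leq_trans (dim_span _)) // size_map size_enum_ord. Qed.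

Lemma rk_add (F : finFieldType) (L : fieldExtType F) n (x y : 'rV[ext L]_n) :
  (rk (x + y) <= rk x + rk y)%N.
Proof.
pose X := span [seq (x ord0 i : L) | i <- enum 'I_n].
pose Y := span [seq (y ord0 i : L) | i <- enum 'I_n].
apply: leq_trans (rk_le (U := (X + Y)%VS) _) _.
  move=> i; rewrite mxE; apply: memv_add; apply: memv_span; apply/mapP; exists i => //; by rewrite mem_enum.
by case: (dimv_add_leqif X Y).
Qed.

Lemma rk_mul (F : finFieldType) (L : fieldExtType F) n v (a : 'rV[ext L]_v) (B : 'M[F]_(v, n)) :
  (rk (a *m liftmx L B) <= rk a)%N.
Proof.
apply: rk_le => j; rewrite mxE; apply: memv_suml => i _.
rewrite /liftmx mxE.
have -> : (a ord0 i * in_alg (ext L) (B i j) : ext L) = (B i j *: (a ord0 i : L)) :> L.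
  by rewrite mulr_algr.
apply: memvZ; apply: memv_span; apply/mapP; exists i => //; by rewrite mem_enum.
Qed.

Lemma rk0 (F : finFieldType) (L : fieldExtType F) n : rk (0 : 'rV[ext L]_n) = 0%N.
Proof.
apply/eqP; rewrite -leqn0; apply: leq_trans (rk_le (U := 0%VS) _) _; last by rewrite dimv0.
move=> i; rewrite mxE; exact: mem0v.
Qed.

Lemma rk_bound (F : finFieldType) (L : fieldExtType F) n v
  (B : 'M[F]_(v, n)) (Bbar : 'M[F]_(n - v, n)) a1 b1 a2 b2 :
  (rk ((a1 *m liftmx L B + b1 *m liftmx L Bbar) - (a2 *m liftmx L B + b2 *m liftmx L Bbar))
     <= rk (a1 - a2) + (n - v))%N.
Proof.
have -> : (a1 *m liftmx L B + b1 *m liftmx L Bbar) - (a2 *m liftmx L B + b2 *m liftmx L Bbar)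
   = (a1 - a2) *m liftmx L B + (b1 - b2) *m liftmx L Bbar.
  by rewrite !mulmxBl opprD addrACA.
apply: leq_trans (rk_add _ _) _; apply: leq_add; first exact: rk_mul.
exact: leq_trans (rk_mul _ _) (rk_size _).
Qed.

Unset Implicit Arguments.
Set Strict Implicit.

Theorem lemma7 (F : finFieldType) (L : fieldExtType F) (n k v : nat)
  (C : {set 'rV[ext L]_n}) (B : 'M[F]_(v, n)) (Bbar : 'M[F]_(n - v, n))
  (Hvn : (v <= n)%N) :
  (n <= \dim {:L})%N ->
  (1 <= k <= n)%N ->
  #|C| = (#|F| ^ (\dim {:L} * k))%N ->
  min_rank_dist C (n - k + 1) ->
  (k <= v)%N ->
  castmx (subnKC Hvn, erefl n) (col_mx B Bbar) \in unitmx ->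
  #|restr C B Bbar| = (#|F| ^ (\dim {:L} * k))%N /\
  min_rank_dist (restr C B Bbar) (v - k + 1).
Proof.
move=> Hm /andP[Hk1 Hkn] HC [_ Hmin] Hkv Hu.
set lP := liftmx L (col_mx B Bbar).
have Hfree : row_free lP.
  by rewrite /row_free mxrank_map -/(row_free _) -(row_free_castmx _ (subnKC Hvn, erefl n)) row_free_unit.
have Hfull : row_full lP.
  by rewrite /row_full mxrank_map -/(row_full _) -(row_full_castmx _ (subnKC Hvn, erefl n)) row_full_unit.
have lPE : lP = col_mx (liftmx L B) (liftmx L Bbar) by rewrite /lP /liftmx map_col_mx.
pose f (c : 'rV[ext L]_n) : 'rV[ext L]_v := lsubmx (c *m pinvmx lP).
have fP : forall c : 'rV[ext L]_n, c = f c *m liftmx L B + rsubmx (c *m pinvmx lP) *m liftmx L Bbar.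
  move=> c; rewrite -mul_row_col hsubmxK -lPE mulmxKpV //; exact: submx_full.
have uniq : forall (a a' : 'rV[ext L]_v) (b b' : 'rV[ext L]_(n - v)), a *m liftmx L B + b *m liftmx L Bbar = a' *m liftmx L B + b' *m liftmx L Bbar -> a = a'.
  move=> a b a' b'; rewrite -!mul_row_col -lPE => /(row_free_inj Hfree) /eq_row_mx [] //.
have restrE : restr C B Bbar = f @: C.
  apply/setP => a; rewrite inE; apply/existsP/imsetP.
    move=> [c /andP[cC /existsP [b /eqP E]]]; exists c => //.
    by apply: (uniq _ _ _ _ (etrans (esym E) (fP c))).
  move=> [c cC ->]; exists c; rewrite cC /=; apply/existsP; exists (rsubmx (c *m pinvmx lP)).
  by apply/eqP; exact: fP.
have finj : {in C &, injective f}.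
  move=> c1 c2 c1C c2C Ef; apply/eqP; apply/negPn/negP => ne.
  have := Hmin _ _ c1C c2C ne.
  rewrite [c1]fP [c2]fP => H; have := leq_trans H (rk_bound _ _ _ _ _ _).
  rewrite Ef subrr rk0; lia.
have cardR : #|restr C B Bbar| = (#|F| ^ (\dim {:L} * k))%N.
  by rewrite restrE card_in_imset.
have lower : forall a1 a2, a1 \in restr C B Bbar -> a2 \in restr C B Bbar -> a1 != a2 ->
    (v - k + 1 <= rk (a1 - a2))%N.
  move=> a1 a2; rewrite restrE => /imsetP [c1 c1C ->] /imsetP [c2 c2C ->] ne.
  have ne' : c1 != c2 by apply: contraNneq ne => ->.
  have := Hmin _ _ c1C c2C ne'.
  rewrite [c1 in rk (c1 - _)]fP [c2 in rk (_ - c2)]fP => H.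
  have := leq_trans H (rk_bound _ _ _ _ _ _); move: (rk (f c1 - f c2)) => r; lia.
split => //; split => //.
set R := restr C B Bbar.
have hk : (k.-1 <= v)%N by lia.
pose g (a : 'rV[ext L]_v) : 'rV[ext L]_(k.-1) := \row_(j < k.-1) a ord0 (widen_ord hk j).
have [ginj | gninj] := boolP [forall a1 in R, forall a2 in R, (g a1 == g a2) ==> (a1 == a2)].
  exfalso.
  have inj : {in R &, injective g}.
    move=> a1 a2 a1R a2R E.
    by move/forall_inP: ginj => /(_ a1 a1R) /forall_inP /(_ a2 a2R) /implyP /(_ (introT eqP E)) /eqP.
  have := max_card [set g x | x in R].
  rewrite card_in_imset // cardR card_mx card_ext mul1n -expnM.
  have F1 := finNzRing_gt1 F.
  rewrite leqNgt ltn_exp2l //; apply/negP/negPn; rewrite ltn_mul2l; apply/andP; split; lia.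
move: gninj; rewrite negb_forall_in => /existsP [a1 /andP [a1R]].
rewrite negb_forall_in => /existsP [a2 /andP [a2R]].
rewrite negb_imply => /andP [/eqP Eg ne].
exists a1, a2; split => //.
apply/eqP; rewrite eqn_leq lower // andbT.
have hj : forall j : 'I_(v - k.-1), (k.-1 + j < v)%N by move=> j; have := ltn_ord j; lia.
pose h (j : 'I_(v - k.-1)) : 'I_v := Ordinal (hj j).
apply: leq_trans (rk_le (U := span [seq (((a1 - a2) ord0 (h j)) : L) | j <- enum 'I_(v - k.-1)]) _) _.
  move=> i; case: (ltnP i k.-1) => hi.
    have := congr1 (fun r : 'rV[ext L]_(k.-1) => r ord0 (Ordinal hi)) Eg.
    rewrite !mxE.
    have -> : widen_ord hk (Ordinal hi) = i by apply: val_inj.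
    by move=> ->; rewrite subrr mem0v.
  have hi' : (i - k.-1 < v - k.-1)%N by have := ltn_ord i; lia.
  have -> : i = h (Ordinal hi') by apply: val_inj => /=; lia.
  apply: memv_span; apply/mapP; exists (Ordinal hi') => //; by rewrite mem_enum.
apply: leq_trans (dim_span _) _; rewrite size_map size_enum_ord; lia.
Qed.
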